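(* Let $I\subset\mathbb{R}$ be an open interval, let $\bm{a}:I\to\mathbb{R}^2_1$ be a spacelike frontal with Gauss mapping $\bm{\nu}:I\to H^1$, and let $r:I\to\mathbb{R}^+$ be a positive constant function. If $\bm{a}$ is not constant (i.e. its image is not a single point), then the pseudo-circle family $C_{(\bm{a}(t),r(t))}$ does not create an envelope.
   Context: All objects are $C^\infty$. The Minkowski plane $\mathbb{R}^2_1$ is $\mathbb{R}^2$ with $\langle\bm{x},\bm{y}\rangle=-x_1y_1+x_2y_2$; $H^1=\{\bm{x}:\langle\bm{x},\bm{x}\rangle=-1\}$. A smooth $\bm{a}:I\to\mathbb{R}^2_1$ is a spacelike frontal if there is a smooth $\bm{\nu}:I\to H^1$ (Gauss mapping) with $\langle\frac{d\bm{a}}{dt}(t),\bm{\nu}(t)\rangle=0$ for all $t$. $C_{(\bm{a}(t),r(t))}=\{\bm{x}\in\mathbb{R}^2_1:\langle\bm{x}-\bm{a}(t),\bm{x}-\bm{a}(t)\rangle=r(t)^2\}$. An envelope of $C_{(\bm{a}(t),r(t))}$ is a smooth $f:I\to\mathbb{R}^2_1$ with $f(t)\in C_{(\bm{a}(t),r(t))}$ and $\langle\frac{df}{dt}(t),f(t)-\bm{a}(t)\rangle=0$ for all $t\in I$. *)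

(* Defs.v *)
From Stdlib Require Import Reals.
From Coquelicot Require Import Coquelicot.
Open Scope R_scope.

Definition vec := (R * R)%type.

Definition minner (x y : vec) : R := - fst x * fst y + snd x * snd y.

Definition vsub (x y : vec) : vec := (fst x - fst y, snd x - snd y).

Definition H1 (x : vec) : Prop := minner x x = -1.

Definition in_interval (lo hi : Rbar) (t : R) : Prop :=
  Rbar_lt lo t /\ Rbar_lt t hi.

Definition smooth_on (lo hi : Rbar) (g : R -> R) : Prop :=
  forall (n : nat) (t : R), in_interval lo hi t -> ex_derive (Derive_n g n) t.

Definition vsmooth_on (lo hi : Rbar) (g : R -> vec) : Prop :=
  smooth_on lo hi (fun s => fst (g s)) /\ smooth_on lo hi (fun s => snd (g s)).

Definition vderiv (g : R -> vec) (t : R) : vec :=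
  (Derive (fun s => fst (g s)) t, Derive (fun s => snd (g s)) t).

Definition spacelike_frontal (lo hi : Rbar) (a nu : R -> vec) : Prop :=
  vsmooth_on lo hi a /\ vsmooth_on lo hi nu /\
  (forall t, in_interval lo hi t -> H1 (nu t)) /\
  (forall t, in_interval lo hi t -> minner (vderiv a t) (nu t) = 0).

Definition pseudo_circle (c : vec) (r : R) (x : vec) : Prop :=
  minner (vsub x c) (vsub x c) = r ^ 2.

Definition is_envelope (lo hi : Rbar) (a : R -> vec) (r : R -> R) (f : R -> vec) : Prop :=
  vsmooth_on lo hi f /\
  (forall t, in_interval lo hi t -> pseudo_circle (a t) (r t) (f t)) /\
  (forall t, in_interval lo hi t -> minner (vderiv f t) (vsub (f t) (a t)) = 0).

(* Main.v *)
Require Import Defs.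
From Stdlib Require Import Reals Lra Psatz.
From Coquelicot Require Import Coquelicot.
Open Scope R_scope.

Lemma der_eq (f : R -> R) x l l' : is_derive f x l -> l = l' -> is_derive f x l'.
Proof. intros H E; subst; exact H. Qed.
Lemma der_sq u v x du dv: is_derive u x du -> is_derive v x dv ->
  is_derive (fun s => - (u s)*(u s) + (v s)*(v s)) x (-2*u x*du + 2*v x*dv).
Proof.
  intros Hu Hv. eapply der_eq.
  - apply (is_derive_plus (fun s => -(u s)*(u s)) (fun s => v s * v s)).
    + apply (is_derive_mult (fun s => - u s) u). apply (is_derive_opp u). exact Hu. exact Hu.
      intros; apply Rmult_comm.
    + apply (is_derive_mult v v); [exact Hv|exact Hv| intros; apply Rmult_comm].
  - unfold plus, mult, opp; simpl. ring.
Qed.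

Lemma interval_open lo hi t : in_interval lo hi t ->
  locally t (fun s => in_interval lo hi s).
Proof.
  intros H. apply (open_and _ _ (open_Rbar_gt lo) (open_Rbar_lt hi)). exact H.
Qed.

Lemma sm_ex lo hi g t : smooth_on lo hi g -> in_interval lo hi t -> ex_derive g t.
Proof. intros H Ht. exact (H 0%nat t Ht). Qed.

Lemma alg (w1 w2 n1 n2 p q c : R) : 0 < c ->
  - w1 * w1 + w2 * w2 = c ^ 2 -> - n1 * n1 + n2 * n2 = -1 ->
  - p * w1 + q * w2 = 0 -> - p * n1 + q * n2 = 0 -> p = 0 /\ q = 0.
Proof.
  intros Hc Hw Hn H1 H2.
  assert (Hid : (w1*n1 - w2*n2)^2 - (w1*n2 - w2*n1)^2 = (w1*w1-w2*w2)*(n1*n1-n2*n2)) by ring.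
  assert (HD : (w1*n2 - w2*n1)^2 > 0).
  { assert (0 <= (w1*n1 - w2*n2)^2) by (apply pow2_ge_0).
    assert (E : (w1*w1-w2*w2)*(n1*n1-n2*n2) = - c^2) by (replace (w1*w1-w2*w2) with (-c^2) by lra;
      replace (n1*n1-n2*n2) with 1 by lra; ring).
    assert (0 < c^2) by (apply pow_lt; lra). lra. }
  assert (HD' : w1*n2 - w2*n1 <> 0) by (intro E; rewrite E in HD; lra).
  assert (Ep : p * (w1*n2 - w2*n1) = 0).
  { replace (p * (w1*n2 - w2*n1)) with (w2 * (- p * n1 + q * n2) - n2 * (- p * w1 + q * w2)) by ring.
    rewrite H1, H2; ring. }
  assert (Eq : q * (w1*n2 - w2*n1) = 0).
  { replace (q * (w1*n2 - w2*n1)) with (w1 * (- p * n1 + q * n2) - n1 * (- p * w1 + q * w2)) by ring.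
    rewrite H1, H2; ring. }
  split.
  - destruct (Rmult_integral _ _ Ep); [auto | contradiction].
  - destruct (Rmult_integral _ _ Eq); [auto | contradiction].
Qed.

Lemma between lo hi t1 t2 x : in_interval lo hi t1 -> in_interval lo hi t2 ->
  Rmin t1 t2 <= x <= Rmax t1 t2 -> in_interval lo hi x.
Proof.
  intros [A1 B1] [A2 B2] [X1 X2]. split.
  - destruct (Rle_dec t1 t2).
    + rewrite Rmin_left in X1 by lra. eapply Rbar_lt_le_trans; [exact A1|]. simpl. exact X1.
    + rewrite Rmin_right in X1 by lra. eapply Rbar_lt_le_trans; [exact A2|]. simpl. exact X1.
  - destruct (Rle_dec t1 t2).
    + rewrite Rmax_right in X2 by lra. eapply Rbar_le_lt_trans; [|exact B2]. simpl. exact X2.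
    + rewrite Rmax_left in X2 by lra. eapply Rbar_le_lt_trans; [|exact B1]. simpl. exact X2.
Qed.

Lemma const_comp lo hi g t1 t2 : smooth_on lo hi g ->
  (forall t, in_interval lo hi t -> Derive g t = 0) ->
  in_interval lo hi t1 -> in_interval lo hi t2 -> g t1 = g t2.
Proof.
  intros Hs Hd H1 H2.
  destruct (MVT_gen g t1 t2 (fun _ => 0)) as [c [_ Hc]].
  - intros x Hx. assert (Hi : in_interval lo hi x) by (apply (between lo hi t1 t2); auto; lra).
    rewrite <- (Hd x Hi). apply Derive_correct. exact (sm_ex _ _ _ _ Hs Hi).
  - intros x Hx. assert (Hi : in_interval lo hi x) by (apply (between lo hi t1 t2); auto; lra).
    apply continuity_pt_filterlim. apply (ex_derive_continuous (K:=R_AbsRing) (V:=R_NormedModule)). exact (sm_ex _ _ _ _ Hs Hi).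
  - lra.
Qed.

Theorem proposition1 (lo hi : Rbar) (a nu : R -> vec) (r : R -> R) :
  Rbar_lt lo hi ->
  spacelike_frontal lo hi a nu ->
  (exists c : R, 0 < c /\ forall t, in_interval lo hi t -> r t = c) ->
  (exists t1 t2 : R, in_interval lo hi t1 /\ in_interval lo hi t2 /\ a t1 <> a t2) ->
  ~ (exists f : R -> vec, is_envelope lo hi a r f).
Proof.
  intros _ [[Ha1 Ha2] [_ [Hnu Hort]]] [c [Hc Hr]] [t1 [t2 [I1 [I2 Hne]]]]
    [f [[Hf1 Hf2] [Hcirc Henv]]].
  assert (Hz : forall t, in_interval lo hi t ->
    Derive (fun s => fst (a s)) t = 0 /\ Derive (fun s => snd (a s)) t = 0).
  { intros t It.
    set (A1 := Derive (fun s => fst (a s)) t).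
    set (A2 := Derive (fun s => snd (a s)) t).
    set (F1 := Derive (fun s => fst (f s)) t).
    set (F2 := Derive (fun s => snd (f s)) t).
    pose (h := fun s => - (fst (f s) - fst (a s)) * (fst (f s) - fst (a s))
                        + (snd (f s) - snd (a s)) * (snd (f s) - snd (a s))).
    assert (Dh : is_derive h t
      (-2 * (fst (f t) - fst (a t)) * (F1 - A1) + 2 * (snd (f t) - snd (a t)) * (F2 - A2))).
    { unfold h.
      assert (d1 := Derive_correct _ _ (sm_ex _ _ _ _ Ha1 It)).
      assert (d2 := Derive_correct _ _ (sm_ex _ _ _ _ Ha2 It)).
      assert (e1 := Derive_correct _ _ (sm_ex _ _ _ _ Hf1 It)).
      assert (e2 := Derive_correct _ _ (sm_ex _ _ _ _ Hf2 It)).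
      fold A1 A2 F1 F2 in d1, d2, e1, e2.
      apply (der_sq (fun s => fst (f s) - fst (a s)) (fun s => snd (f s) - snd (a s))).
      - apply (is_derive_minus (fun s => fst (f s)) (fun s => fst (a s))); assumption.
      - apply (is_derive_minus (fun s => snd (f s)) (fun s => snd (a s))); assumption. }
    assert (Dh0 : is_derive h t 0).
    { apply (is_derive_ext_loc (fun _ => c ^ 2)).
      - generalize (interval_open _ _ _ It). apply filter_imp. intros s Is.
        rewrite <- (Hr s Is). symmetry. exact (Hcirc s Is).
      - apply (is_derive_const (K:=R_AbsRing) (V:=R_NormedModule)). }
    assert (E := is_derive_unique _ _ _ Dh). rewrite (is_derive_unique _ _ _ Dh0) in E.
    assert (Hen := Henv t It). unfold minner, vderiv, vsub in Hen; simpl in Hen.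
    fold F1 F2 in Hen.
    assert (Ho := Hort t It). unfold minner, vderiv in Ho; simpl in Ho. fold A1 A2 in Ho.
    assert (Hn := Hnu t It). unfold H1, minner in Hn.
    assert (Hw := Hcirc t It). unfold pseudo_circle, minner, vsub in Hw; simpl in Hw.
    rewrite (Hr t It) in Hw.
    apply (alg (fst (f t) - fst (a t)) (snd (f t) - snd (a t)) (fst (nu t)) (snd (nu t)) A1 A2 c);
      auto; nra. }
  apply Hne.
  destruct (a t1) as [x1 y1] eqn:E1. destruct (a t2) as [x2 y2] eqn:E2.
  assert (C1 := const_comp lo hi (fun s => fst (a s)) t1 t2 Ha1 (fun t It => proj1 (Hz t It)) I1 I2).
  assert (C2 := const_comp lo hi (fun s => snd (a s)) t1 t2 Ha2 (fun t It => proj2 (Hz t It)) I1 I2).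
  simpl in C1, C2. rewrite E1, E2 in C1, C2. simpl in C1, C2. subst. reflexivity.
Qed.
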